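(* Let $A\in\mathcal S_{0,1}$. Then $LJ=J$ and $L(i_VF)=\frac12 i_VF$ for every $V\in\mathbb R^n$.
   Context: $G\subset SO(r)$ compact with Lie algebra $\mathfrak g$; $E$ the trivial $G$-vector bundle over $\mathbb R^n$. Connection $A=A_idx^i$, curvature $F_{ij}=\partial_iA_j-\partial_jA_i+[A_i,A_j]$; repeated indices summed; $\nabla_pT=\partial_pT+[A_p,T]$. $J=\nabla_pF_{pj}dx^j$, $i_VF=V^pF_{pj}dx^j$. $\mathcal S_{0,1}$: connections with $\nabla_pF_{pj}-\frac12x^pF_{pj}=0$ for all $j$ and $\sup|\nabla^kA|<\infty$ for all $k\ge1$. For a $\mathfrak g$-valued 1-form $\theta$: $((d^\nabla)^*d^\nabla\theta)_j=-\nabla_p(\nabla_p\theta_j-\nabla_j\theta_p)$, $\mathcal R(\theta)_j=[F_{pj},\theta_p]$, $(i_{x/2}d^\nabla\theta)_j=\frac12x^k(\nabla_k\theta_j-\nabla_j\theta_k)$, and $L\theta=-[(d^\nabla)^*d^\nabla\theta+\mathcal R(\theta)+i_{x/2}d^\nabla\theta]$. *)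

(* Defs.v *)
From HB Require Import structures.
From mathcomp Require Import all_boot all_order all_algebra.
From mathcomp Require Import all_classical all_reals all_analysis.
Set Implicit Arguments. Unset Strict Implicit. Unset Printing Implicit Defensive.
Import Order.TTheory GRing.Theory Num.Theory.
Import numFieldNormedType.Exports.
Local Open Scope ring_scope.

Section YM.
Variables (R : realType) (n r : nat).

(* points of R^n are row vectors; x^p is the coordinate x 0 p *)
Definition coord (x : 'rV[R]_n) (p : 'I_n) : R := x ord0 p.

Definition ebasis (i : 'I_n) : 'rV[R]_n := delta_mx ord0 i.

Definition dP (i : 'I_n) (f : 'rV[R]_n -> 'M[R]_r) : 'rV[R]_n -> 'M[R]_r :=
  fun x => \matrix_(a, b) ('D_(ebasis i) (fun y => f y a b) x).

Definition iterD (s : seq 'I_n) (f : 'rV[R]_n -> 'M[R]_r) : 'rV[R]_n -> 'M[R]_r :=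
  foldr dP f s.

Definition smooth_mx (f : 'rV[R]_n -> 'M[R]_r) : Prop :=
  forall (s : seq 'I_n) (i : 'I_n) (x : 'rV[R]_n) (a b : 'I_r),
    derivable (fun y => iterD s f y a b) x (ebasis i).

Definition lie (M N : 'M[R]_r) : 'M[R]_r := M *m N - N *m M.

Definition lie_subalg_so (g : set 'M[R]_r) : Prop :=
  [/\ g 0, (forall M N, g M -> g N -> g (M + N)),
      (forall (c : R) M, g M -> g (c *: M)),
      (forall M, g M -> M^T = - M) &
      (forall M N, g M -> g N -> g (lie M N))].

(* a connection A = A_i dx^i, a g-valued 1-gform *)
Definition gform := 'I_n -> 'rV[R]_n -> 'M[R]_r.

Variable A : gform.

Definition curv (i j : 'I_n) : 'rV[R]_n -> 'M[R]_r :=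
  fun x => dP i (A j) x - dP j (A i) x + lie (A i x) (A j x).

Definition nabla (p : 'I_n) (T : 'rV[R]_n -> 'M[R]_r) : 'rV[R]_n -> 'M[R]_r :=
  fun x => dP p T x + lie (A p x) (T x).

Definition Jform : gform := fun j x => \sum_p nabla p (curv p j) x.

Definition iVF (V : 'rV[R]_n) : gform := fun j x => \sum_p coord V p *: curv p j x.

Definition soliton_eq : Prop :=
  forall j x, \sum_p nabla p (curv p j) x - 2^-1 *: \sum_p coord x p *: curv p j x = 0.

(* sup |nabla^k A| < oo for all k >= 1, read as: all k-th order partial
   derivatives of the components of A are bounded on R^n *)
Definition bounded_derivs : Prop :=
  forall (s : seq 'I_n), (0 < size s)%N -> forall i, exists C : R,
    forall x a b, `|iterD s (A i) x a b| <= C.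

Definition dstard (th : gform) : gform :=
  fun j x => - \sum_p nabla p (fun y => nabla p (th j) y - nabla j (th p) y) x.

Definition Rterm (th : gform) : gform :=
  fun j x => \sum_p lie (curv p j x) (th p x).

Definition ixd (th : gform) : gform :=
  fun j x => 2^-1 *: \sum_k coord x k *: (nabla k (th j) x - nabla j (th k) x).

Definition Lop (th : gform) : gform :=
  fun j x => - (dstard th j x + Rterm th j x + ixd th j x).

End YM.

Definition S01 (R : realType) (n r : nat) (g : set 'M[R]_r) (A : gform R n r) : Prop :=
  [/\ (forall i x, g (A i x)), (forall i, smooth_mx (A i)),
      soliton_eq A & bounded_derivs A].

(* Main.v *)
Require Import Defs.
From HB Require Import structures.
From mathcomp Require Import all_boot all_order all_algebra.
From mathcomp Require Import all_classical all_reals all_analysis.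
From mathcomp Require Import ring lra.
Import Order.TTheory GRing.Theory Num.Theory.
Local Open Scope ring_scope.

Module PT.
Set Implicit Arguments. Unset Strict Implicit. Unset Printing Implicit Defensive.
Import Order.TTheory GRing.Theory Num.Theory.
Import numFieldNormedType.Exports.
Local Open Scope ring_scope.
Local Open Scope classical_set_scope.

Lemma deriv_cont (R : realType) (f : R -> R) df : (forall x : R, is_derive x (1:R) f (df x)) -> continuous f.
Proof.
move=> H x; apply/differentiable_continuous; rewrite -derivable1_diffP.
by case: (H x).
Qed.

Lemma MVT_sym (R : realType) (f df : R -> R) (a b : R) :
  (forall x : R, is_derive x (1:R) f (df x)) ->
  exists c, `|c - a| <= `|b - a| /\ f b - f a = df c * (b - a).
Proof.
move=> H; have fc := deriv_cont H.
have wc : forall u v, {within `[u, v], continuous f}.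
  by move=> u v; apply: continuous_subspaceT.
case: (lerP a b) => ab.
  have [c cab E] := MVT_segment ab (fun x _ => H x) (wc a b).
  exists c; split => //.
  move: cab; rewrite in_itv /= => /andP[h1 h2].
  rewrite !ger0_norm ?subr_ge0 //; lra.
have [c cab E] := MVT_segment (ltW ab) (fun x _ => H x) (wc b a).
exists c; split.
  move: cab; rewrite in_itv /= => /andP[h1 h2].
  rewrite !ler0_norm ?subr_le0 ?(ltW ab) //; lra.
by rewrite -opprB E -mulrN opprB.
Qed.

Lemma is_derive1_cvg (R : realType) (f : R -> R) x df : is_derive x (1:R) f df ->
  (fun h => h^-1 * (f (h + x) - f x)) @ 0^' --> df.
Proof.
move=> [D E]; rewrite -E.
have -> : (fun h => h^-1 * (f (h + x) - f x)) = (fun h => h^-1 *: ((f \o shift x) (h *: 1) - f x)).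
  by apply/funext => h /=; rewrite /shift /= [_ *: 1]mulr1.
exact: D.
Qed.

Lemma cvg_le_dist (R : realType) (T : Type) (F : set_system T) {PF : ProperFilter F}
  (f : T -> R) l c e : f @ F --> l -> (\forall k \near F, `|f k - c| <= e) -> `|l - c| <= e.
Proof.
move=> fl Hn.
have cl : closed [set y : R | `|y - c| <= e].
  have -> : [set y : R | `|y - c| <= e] = (fun y => `|y - c|) @^-1` [set z | z <= e] by [].
  apply: preimage_closed; last exact: closed_le.
  move=> y _; apply: (@continuous_comp _ _ _ (fun y => y - c) (@Num.norm _ R)); last exact: norm_continuous.
  by apply: cvgB; [exact: cvg_id| exact: cvg_cst].
exact: (closed_cvg _ cl Hn _ fl).
Qed.

Lemma local_bound (R : realType) (G Gs Gt a b : R -> R -> R)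
 (HGs : forall s t, is_derive s (1:R) (fun u => G u t) (Gs s t))
 (HGt : forall s t, is_derive t (1:R) (G s) (Gt s t))
 (Ha : forall s t, is_derive t (1:R) (Gs s) (a s t))
 (Hb : forall s t, is_derive s (1:R) (fun u => Gt u t) (b s t))
 s1 t e d : 0 < d ->
 (forall u v, `|u - s1| < d -> `|v - t| < d -> `|a u v - a s1 t| <= e) ->
 `|b s1 t - a s1 t| <= e.
Proof.
move=> d0 Hbox.
apply: (cvg_le_dist (is_derive1_cvg (Hb s1 t))).
near=> h.
have hn0 : h != 0 by near: h; exact: nbhs_dnbhs_neq.
have hd : `|h| < d by near: h; exact: dnbhs0_lt.
have Lk : (fun k => h^-1 * (k^-1 * (G (h + s1) (k + t) - G (h + s1) t)
     - k^-1 * (G s1 (k + t) - G s1 t))) @ 0^' --> h^-1 * (Gt (h + s1) t - Gt s1 t).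
  apply: cvgMl_tmp; apply: cvgB; exact: is_derive1_cvg.
apply: (cvg_le_dist Lk).
near=> k.
have kn0 : k != 0 by near: k; exact: nbhs_dnbhs_neq.
have kd : `|k| < d by near: k; exact: dnbhs0_lt.
have [xi [Hxi Exi]] := @MVT_sym R (fun u => G u (k+t) - G u t) (fun u => Gs u (k+t) - Gs u t) s1 (h + s1)
   (fun u => is_deriveB (HGs u (k+t)) (HGs u t)).
have [eta [Heta Eeta]] := @MVT_sym R (Gs xi) (a xi) t (k+t) (fun v => Ha xi v).
have -> : h^-1 * (k^-1 * (G (h + s1) (k + t) - G (h + s1) t)
     - k^-1 * (G s1 (k + t) - G s1 t)) = a xi eta.
  rewrite -mulrBr.
  move: Exi; rewrite /= => ->; rewrite Eeta !addrK; field.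
  by rewrite hn0 kn0.
apply: Hbox.
  by apply: le_lt_trans Hxi _; rewrite addrK.
by apply: le_lt_trans Heta _; rewrite addrK.
Unshelve. all: by end_near.
Qed.

Lemma near_rad (R : realType) (x : R) (P : R -> Prop) :
  (\forall y \near x, P y) -> exists2 r, 0 < r & forall y, `|x - y| < r -> P y.
Proof.
move=> /nbhs_ballP [r r0 H]; exists r => // y yr; apply: H.
Qed.

Lemma cont_rad (R : realType) (f : R -> R) x e : {for x, continuous f} -> 0 < e ->
  exists2 r, 0 < r & forall y, `|x - y| < r -> `|f y - f x| < e.
Proof.
move=> cf e0; apply: near_rad.
move/cvgr_dist_lt: cf => /(_ _ e0); apply: filterS => y.
by rewrite distrC.
Qed.

Lemma closed_abs_le (R : realType) (f : R -> R) c : continuous f ->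
  closed [set u | `|f u| <= c].
Proof.
move=> cf.
have -> : [set u | `|f u| <= c] = (fun y => `|f y|) @^-1` [set z | z <= c] by [].
apply: preimage_closed; last exact: closed_le.
move=> y _; apply: (@continuous_comp _ _ _ f (@Num.norm _ R)); first exact: cf.
exact: norm_continuous.
Qed.

Lemma good_point (R : realType) (a : R -> R -> R)
  (ca1 : forall t, continuous (fun u => a u t)) (ca2 : forall s, continuous (a s))
  s0 t e d : 0 < e -> 0 < d ->
  exists s1, `|s1 - s0| < d /\ exists2 d', 0 < d' &
    forall u v, `|u - s1| < d' -> `|v - t| < d' -> `|a u v - a s1 t| <= e.
Proof.
move=> e0 d0.
have e20 : 0 < e / 2 by rewrite divr_gt0.
have d20 : 0 < d / 2 by rewrite divr_gt0.
pose E (m : nat) := [set u | forall v, `|v - t| <= m.+1%:R^-1 -> `|a u v - a u t| <= e / 2].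
pose C := closed_ball s0 (d / 2).
have clE m : closed (E m).
  have -> : E m = \bigcap_(v in [set v | `|v - t| <= m.+1%:R^-1])
                   [set u | `|a u v - a u t| <= e / 2].
    by apply/seteqP; split => u /= H v; [move=> /H|move=> /H].
  apply: closed_bigI => v _; apply: closed_abs_le.
  by move=> u; apply: cvgB; [exact: ca1|exact: ca1].
have clC : closed C by exact: closed_ball_closed.
pose O m := ~` (E m `&` C).
have oO m : open (O m) by rewrite /O openC; exact: closedI.
case: (pselect (forall m, dense (O m))) => [Hd|Hnd].
  have := @Baire R R O (fun i => conj (oO i) (Hd i)).
  move=> /(_ (ball s0 (d / 2))) [].
  - by exists s0; exact: ballxx.
  - exact: ball_open.
  move=> u [Bu Ou]; exfalso.
  have := ca2 u t; move/cvgr_dist_lt => /(_ _ e20) /near_rad [r r0 Hr].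
  have [m _ Hm] := near_infty_natSinv_lt (PosNum r0).
  have /= Hm' := Hm m (leqnn m).
  apply: (Ou m I); split; last exact: subset_closed_ball.
  move=> v vt; rewrite distrC; apply/ltW/Hr.
  by rewrite distrC; apply: le_lt_trans vt Hm'.
move: Hnd => /existsNP [m /denseNE [D [[x [oD Dx]] DO]]].
have Ex : (E m `&` C) x.
  apply: contrapT => nx.
  by have : (D `&` O m) x by []; rewrite DO.
case: Ex => Exm Cx.
have [r1 r10 Hr1] := near_rad (open_nbhs_nbhs (conj oD Dx)).
have [r2 r20 Hr2] := cont_rad (ca1 t x) e20.
have m0 : 0 < m.+1%:R^-1 :> R by rewrite invr_gt0 ltr0n.
exists x; split.
  move: Cx; rewrite /C closed_ballE // /closed_ball_ /= distrC => H.
  by apply: le_lt_trans H _; rewrite ltr_pdivrMr // ltr_pMr // ltr1n.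
exists (Num.min (Num.min r1 r2) m.+1%:R^-1).
  by rewrite !lt_min r10 r20 m0.
move=> u v; rewrite !lt_min => /andP[/andP[ur1 ur2] _] /andP[/andP[_ _] vm].
have Du : D u by apply: Hr1; rewrite distrC.
have Eu : E m u.
  apply: contrapT => nu.
  have H : (D `&` O m) u by split => // -[].
  by rewrite DO in H.
have h1 := Eu v (ltW vm).
have h2 : `|a u t - a x t| < e / 2 by apply: Hr2; rewrite distrC.
apply: le_trans (ler_distD (a u t) _ _) _.
by rewrite [e in _ <= e](splitr e) lerD // ltW.
Qed.

Lemma clairaut2 (R : realType) (G Gs Gt a b : R -> R -> R)
 (HGs : forall s t, is_derive s (1:R) (fun u => G u t) (Gs s t))
 (HGt : forall s t, is_derive t (1:R) (G s) (Gt s t))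
 (Ha : forall s t, is_derive t (1:R) (Gs s) (a s t))
 (Hb : forall s t, is_derive s (1:R) (fun u => Gt u t) (b s t))
 (ca1 : forall t, continuous (fun u => a u t)) (ca2 : forall s, continuous (a s))
 (cb1 : forall t, continuous (fun u => b u t)) :
 forall s t, a s t = b s t.
Proof.
move=> s0 t; apply/eqP; rewrite eq_sym -subr_eq0 -normr_le0.
apply/ler_addgt0Pr => e e0; rewrite add0r.
have e20 : 0 < e / 2 by rewrite divr_gt0.
have cc : {for s0, continuous (fun u => b u t - a u t)}.
  by apply: cvgB; [exact: cb1|exact: ca1].
have [d d0 Hd] := cont_rad cc e20.
have [s1 [s1d [d' d'0 Hbox]]] := good_point ca1 ca2 s0 t e20 d0.
have Hl := local_bound HGs HGt Ha Hb d'0 Hbox.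
have H2 : `|b s1 t - a s1 t - (b s0 t - a s0 t)| < e / 2 by apply: Hd; rewrite distrC.
have := ler_distD (b s1 t - a s1 t) (b s0 t - a s0 t) 0.
rewrite !subr0 => H3; apply: le_trans H3 _.
rewrite [e in _ <= e](splitr e) lerD // ?ltW //.
by rewrite distrC.
Qed.

Lemma is_derive_line (R : realType) (V : normedModType R) (f : V -> R) v y c df :
  is_derive (c *: v + y) v f df -> is_derive c (1:R) (fun u => f (u *: v + y)) df.
Proof.
move=> [D E].
have Q : (fun h : R => h^-1 *: (((fun u => f (u *: v + y)) \o shift c) (h *: 1)
             - f (c *: v + y)))
       = (fun h : R => h^-1 *: ((f \o shift (c *: v + y)) (h *: v) - f (c *: v + y))).
  apply/funext => h /=; rewrite /shift /= [_ *: 1]mulr1 scalerDl addrA.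
  done.
split; first by rewrite /derivable Q.
by rewrite /derive Q.
Qed.

Lemma clairaut_vec (R : realType) (V : normedModType R) (g : V -> R) (ei ej : V)
  (D1 : forall x, derivable g x ei) (D2 : forall x, derivable g x ej)
  (D3 : forall x, derivable ('D_ei g) x ej) (D4 : forall x, derivable ('D_ej g) x ei)
  (D5 : forall x, derivable ('D_ej ('D_ei g)) x ei)
  (D6 : forall x, derivable ('D_ej ('D_ei g)) x ej)
  (D7 : forall x, derivable ('D_ei ('D_ej g)) x ei) :
  forall x, 'D_ej ('D_ei g) x = 'D_ei ('D_ej g) x.
Proof.
move=> x.
pose P s t := s *: ei + (t *: ej + x).
have PC s t : t *: ej + (s *: ei + x) = P s t by rewrite /P addrCA.
pose G s t := g (P s t).
pose Gs s t := 'D_ei g (P s t).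
pose Gt s t := 'D_ej g (P s t).
pose a s t := 'D_ej ('D_ei g) (P s t).
pose b s t := 'D_ei ('D_ej g) (P s t).
have line2 (h : V -> R) s df : (forall t, is_derive (P s t) ej h (df t)) ->
    forall t, is_derive t (1:R) (fun v => h (P s v)) (df t).
  move=> H t.
  have -> : (fun v => h (P s v)) = (fun v => h (v *: ej + (s *: ei + x))).
    by apply/funext => v; rewrite PC.
  by apply: is_derive_line; rewrite PC.
have line1 (h : V -> R) t df : (forall s, is_derive (P s t) ei h (df s)) ->
    forall s, is_derive s (1:R) (fun u => h (P u t)) (df s).
  by move=> H s; apply: is_derive_line.
have Hc := @clairaut2 R G Gs Gt a b.
have := Hc (fun s t => line1 g t _ (fun s => derivableP (D1 _)) s)
           (fun s t => line2 g s _ (fun t => derivableP (D2 _)) t)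
           (fun s t => line2 _ s _ (fun t => derivableP (D3 _)) t)
           (fun s t => line1 _ t _ (fun s => derivableP (D4 _)) s).
move=> /(_ (fun t => deriv_cont (line1 _ t _ (fun s => derivableP (D5 _)))))
        /(_ (fun s => deriv_cont (line2 _ s _ (fun t => derivableP (D6 _)))))
        /(_ (fun t => deriv_cont (line1 _ t _ (fun s => derivableP (D7 _))))).
by move=> /(_ 0 0); rewrite /a /b /P !scale0r !add0r.
Qed.

End PT.

Module PZ.
Import PT.
Set Implicit Arguments. Unset Strict Implicit. Unset Printing Implicit Defensive.
Import GRing.Theory.
Local Open Scope ring_scope.

Inductive zx := ZV of nat | Z0 | ZA of zx & zx | ZN of zx.

Fixpoint zev (V : zmodType) (l : seq V) (e : zx) : V :=
  match e with
  | ZV k => nth 0 l k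
  | Z0 => 0
  | ZA a b => zev l a + zev l b
  | ZN a => - zev l a
  end.

Fixpoint zco (e : zx) (k : nat) : int :=
  match e with
  | ZV j => (j == k)%:Z
  | Z0 => 0
  | ZA a b => zco a k + zco b k
  | ZN a => - zco a k
  end.

Lemma zev_co (V : zmodType) (l : seq V) e N : (size l <= N)%N ->
  zev l e = \sum_(k < N) nth 0 l k *~ zco e k.
Proof.
move=> lN; elim: e => [j||a IHa b IHb|a IHa] /=.
- case: (ltnP j N) => jN.
    rewrite (bigD1 (Ordinal jN)) //= eqxx mulr1z big1 ?addr0 // => k.
    by rewrite -val_eqE /= eq_sym => /negbTE ->; rewrite mulr0z.
  rewrite nth_default ?(leq_trans lN) // big1 // => k _.
  have : j != k by rewrite neq_ltn (leq_trans (ltn_ord k) jN) orbT.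
  by move/negbTE ->; rewrite mulr0z.
- by rewrite big1 // => k _; rewrite mulr0z.
- by rewrite IHa IHb -big_split /=; apply: eq_bigr => k _; rewrite mulrzDr.
- by rewrite IHa -sumrN; apply: eq_bigr => k _; rewrite mulrNz.
Qed.

Definition zchk N e1 e2 := all (fun k => zco e1 k == zco e2 k) (iota 0 N).

Lemma zsound (V : zmodType) (l : seq V) e1 e2 N : (size l <= N)%N ->
  zchk N e1 e2 = true -> zev l e1 = zev l e2.
Proof.
move=> lN /allP H; rewrite !(@zev_co _ l _ N lN); apply: eq_bigr => k _.
have kin : (k : nat) \in iota 0 N by rewrite mem_iota add0n ltn_ord.
by have /eqP -> := H k kin.
Qed.

Ltac zins t l :=
  lazymatch l with
  | nil => constr:(t :: nil)
  | t :: _ => l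
  | ?h :: ?l' => let l'' := zins t l' in constr:(h :: l'')
  end.

Ltac zatoms t l :=
  lazymatch t with
  | @GRing.add _ ?a ?b => let l1 := zatoms a l in zatoms b l1
  | @GRing.opp _ ?a => zatoms a l
  | @GRing.zero _ => l
  | _ => zins t l
  end.

Ltac zidx t l :=
  lazymatch l with
  | t :: _ => constr:(0%N)
  | _ :: ?l' => let k := zidx t l' in constr:(k.+1)
  end.

Ltac zreif t l :=
  lazymatch t with
  | @GRing.add _ ?a ?b => let x := zreif a l in let y := zreif b l in constr:(ZA x y)
  | @GRing.opp _ ?a => let x := zreif a l in constr:(ZN x)
  | @GRing.zero _ => constr:(Z0)
  | _ => let k := zidx t l in constr:(ZV k)
  end.

Ltac zlen l :=
  lazymatch l with
  | nil => constr:(0%N)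
  | _ :: ?l' => let k := zlen l' in constr:(k.+1)
  end.

Ltac zmod :=
  lazymatch goal with
  | |- @eq ?T ?x ?y =>
    let l0 := constr:(@nil T) in
    let l1 := zatoms x l0 in
    let l := zatoms y l1 in
    let ex := zreif x l in
    let ey := zreif y l in
    let N := zlen l in
    refine (@zsound _ l ex ey N (leqnn N) _); vm_compute; reflexivity
  end.



End PZ.

Module PL.
Import PT PZ.
Set Implicit Arguments. Unset Strict Implicit. Unset Printing Implicit Defensive.
Import GRing.Theory.
Local Open Scope ring_scope.

Inductive lx (K : Type) := LV of nat | L0 | LA of lx K & lx K | LN of lx K | LS of K & lx K.
Arguments L0 {K}.

Fixpoint lev (K : pzRingType) (V : lmodType K) (l : seq V) (e : lx K) : V :=
  match e with
  | LV k => nth 0 l k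
  | L0 => 0
  | LA a b => lev l a + lev l b
  | LN a => - lev l a
  | LS c a => c *: lev l a
  end.

Fixpoint lco (K : pzRingType) (e : lx K) (k : nat) : K :=
  match e with
  | LV j => if eqn j k then 1 else 0
  | L0 => 0
  | LA a b => lco a k + lco b k
  | LN a => - lco a k
  | LS c a => c * lco a k
  end.

Lemma lev_co (K : pzRingType) (V : lmodType K) (l : seq V) e N : (size l <= N)%N ->
  lev l e = \sum_(k < N) lco e k *: nth 0 l k.
Proof.
move=> lN; elim: e => [j||a IHa b IHb|a IHa|c a IHa] /=.
- rewrite eqnE; case: (ltnP j N) => jN.
    rewrite (bigD1 (Ordinal jN)) //= eqxx scale1r big1 ?addr0 // => k.
    by rewrite -val_eqE /= eq_sym => /negbTE ->; rewrite scale0r.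
  rewrite nth_default ?(leq_trans lN) // big1 // => k _.
  have : j != k by rewrite neq_ltn (leq_trans (ltn_ord k) jN) orbT.
  by move/negbTE ->; rewrite scale0r.
- by rewrite big1 // => k _; rewrite scale0r.
- by rewrite IHa IHb -big_split /=; apply: eq_bigr => k _; rewrite scalerDl.
- by rewrite IHa -sumrN; apply: eq_bigr => k _; rewrite scaleNr.
- by rewrite IHa scaler_sumr; apply: eq_bigr => k _; rewrite scalerA.
Qed.

Lemma lsound (K : pzRingType) (V : lmodType K) (l : seq V) e1 e2 N : (size l <= N)%N ->
  (forall k, (k < N)%N -> lco e1 k = lco e2 k) -> lev l e1 = lev l e2.
Proof.
move=> lN H; rewrite !(@lev_co _ _ l _ N lN); apply: eq_bigr => k _.
by rewrite H.
Qed.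

Ltac lconvb h t := constr:(ltac:(tryif unify h t then exact true else exact false) : bool).

Ltac lins t l :=
  lazymatch l with
  | nil => constr:(t :: nil)
  | ?h :: ?l' =>
    let b := lconvb h t in
    lazymatch b with
    | true => l
    | false => let l'' := lins t l' in constr:(h :: l'')
    end
  end.

Ltac latoms t l :=
  lazymatch t with
  | @GRing.add _ ?a ?b => let l1 := latoms a l in latoms b l1
  | @GRing.opp _ ?a => latoms a l
  | @GRing.zero _ => l
  | @GRing.scale _ _ _ ?a => latoms a l
  | _ => lins t l
  end.

Ltac lidx t l :=
  lazymatch l with
  | ?h :: ?l' =>
    let b := lconvb h t in
    lazymatch b with
    | true => constr:(0%N)
    | false => let k := lidx t l' in constr:(k.+1)
    end
  end.

Ltac lreif K t l :=
  lazymatch t with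
  | @GRing.add _ ?a ?b => let x := lreif K a l in let y := lreif K b l in constr:(@LA K x y)
  | @GRing.opp _ ?a => let x := lreif K a l in constr:(@LN K x)
  | @GRing.zero _ => constr:(@L0 K)
  | @GRing.scale _ _ ?c ?a => let x := lreif K a l in constr:(@LS K c x)
  | _ => let k := lidx t l in constr:(@LV K k)
  end.

Ltac llen l :=
  lazymatch l with
  | nil => constr:(0%N)
  | _ :: ?l' => let k := llen l' in constr:(k.+1)
  end.

Ltac lcases k N :=
  lazymatch N with
  | 0%N => let H := fresh in move=> H; exfalso; exact: (notF H)
  | ?N'.+1 => case: k => [|k]; [move=> _; cbn [lco eqn]|lcases k N']
  end.

Ltac lmod_split K :=
  lazymatch goal with
  | |- @eq ?T ?x ?y =>
    let l0 := constr:(@nil T) in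
    let l1 := latoms x l0 in
    let l := latoms y l1 in
    let ex := lreif K x l in
    let ey := lreif K y l in
    let N := llen l in
    refine (@lsound K _ l ex ey N (leqnn N) _);
    let k := fresh "k" in move=> k; lcases k N
  end.

Ltac lmod K := lmod_split K; ring.



End PL.

Module PS.
Import PT PZ PL.
Set Implicit Arguments. Unset Strict Implicit. Unset Printing Implicit Defensive.
Import Order.TTheory GRing.Theory Num.Theory.
Import numFieldNormedType.Exports.
Local Open Scope ring_scope.
Local Open Scope classical_set_scope.

Section Smooth.
Variables (R : realType) (n r : nat).
Local Notation FF := ('rV[R]_n -> 'M[R]_r).
Implicit Types (f g h : FF).
Local Notation eb i := (@ebasis R n i).

Definition dM f := forall i x (a b : 'I_r), derivable (fun y => f y a b) x (eb i).
Definition upto (N : nat) f := forall t, (size t < N)%N -> dM (Defs.iterD t f).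

Lemma iterD_rcons s i f : Defs.iterD (rcons s i) f = Defs.iterD s (dP i f).
Proof. by rewrite /Defs.iterD foldr_rcons. Qed.

Lemma smoothE f : smooth_mx f <-> forall N, upto N f.
Proof.
split; first by move=> H N t _ i x a b; exact: H.
by move=> H s i x a b; apply: (H (size s).+1 s).
Qed.

Lemma upto_mono N M f : (M <= N)%N -> upto N f -> upto M f.
Proof. by move=> MN H t tM; apply: H; apply: leq_trans tM MN. Qed.

Lemma entry_dP i f (a b : 'I_r) :
  (fun y => dP i f y a b) = 'D_(eb i) (fun y => f y a b).
Proof. by apply/funext => y; rewrite mxE. Qed.

Lemma dP_entry i f x (a b : 'I_r) : dP i f x a b = 'D_(eb i) (fun y => f y a b) x.
Proof. by rewrite mxE. Qed.

Lemma dP_addE i f g : dM f -> dM g ->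
  dP i (fun x => f x + g x) = (fun x => dP i f x + dP i g x).
Proof.
move=> Hf Hg; apply/funext => x; apply/matrixP => a b; rewrite !mxE.
have -> : (fun y => (f y + g y) a b) = (fun y => f y a b) + (fun y => g y a b).
  by apply/funext => y; rewrite !mxE.
by rewrite deriveD.
Qed.

Lemma dM_add f g : dM f -> dM g -> dM (fun x => f x + g x).
Proof.
move=> Hf Hg i x a b.
have -> : (fun y => (f y + g y) a b) = (fun y => f y a b) + (fun y => g y a b).
  by apply/funext => y; rewrite !mxE.
exact: derivableD.
Qed.

Lemma iterD_add t f g : upto (size t) f -> upto (size t) g ->
  Defs.iterD t (fun x => f x + g x) = (fun x => Defs.iterD t f x + Defs.iterD t g x).
Proof.
elim: t => [//|i t IH] /= Hf Hg.
rewrite IH; first by apply: dP_addE; [exact: Hf|exact: Hg].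
- exact: upto_mono Hf.
- exact: upto_mono Hg.
Qed.

Lemma upto_add N f g : upto N f -> upto N g -> upto N (fun x => f x + g x).
Proof.
move=> Hf Hg t tN; rewrite iterD_add.
- by apply: dM_add; [exact: Hf|exact: Hg].
- exact: upto_mono (ltnW tN) Hf.
- exact: upto_mono (ltnW tN) Hg.
Qed.

Lemma dP_oppE i f : dM f -> dP i (fun x => - f x) = (fun x => - dP i f x).
Proof.
move=> Hf; apply/funext => x; apply/matrixP => a b; rewrite !mxE.
have -> : (fun y => (- f y) a b) = - (fun y => f y a b).
  by apply/funext => y; rewrite !mxE.
by rewrite deriveN.
Qed.

Lemma dM_opp f : dM f -> dM (fun x => - f x).
Proof.
move=> Hf i x a b.
have -> : (fun y => (- f y) a b) = - (fun y => f y a b).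
  by apply/funext => y; rewrite !mxE.
exact: derivableN.
Qed.

Lemma iterD_opp t f : upto (size t) f ->
  Defs.iterD t (fun x => - f x) = (fun x => - Defs.iterD t f x).
Proof.
elim: t => [//|i t IH] /= Hf.
rewrite IH; first by apply: dP_oppE; exact: Hf.
exact: upto_mono Hf.
Qed.

Lemma upto_opp N f : upto N f -> upto N (fun x => - f x).
Proof.
move=> Hf t tN; rewrite iterD_opp; first by apply: dM_opp; exact: Hf.
exact: upto_mono (ltnW tN) Hf.
Qed.

Lemma dP_sclE i (c : R) f : dM f -> dP i (fun x => c *: f x) = (fun x => c *: dP i f x).
Proof.
move=> Hf; apply/funext => x; apply/matrixP => a b; rewrite !mxE.
have -> : (fun y => (c *: f y) a b) = c \*: (fun y => f y a b).
  by apply/funext => y; rewrite !mxE.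
by rewrite deriveZ.
Qed.

Lemma dM_scl (c : R) f : dM f -> dM (fun x => c *: f x).
Proof.
move=> Hf i x a b.
have -> : (fun y => (c *: f y) a b) = c \*: (fun y => f y a b).
  by apply/funext => y; rewrite !mxE.
exact: derivableZ.
Qed.

Lemma iterD_scl t (c : R) f : upto (size t) f ->
  Defs.iterD t (fun x => c *: f x) = (fun x => c *: Defs.iterD t f x).
Proof.
elim: t => [//|i t IH] /= Hf.
rewrite IH; first by apply: dP_sclE; exact: Hf.
exact: upto_mono Hf.
Qed.

Lemma upto_scl N (c : R) f : upto N f -> upto N (fun x => c *: f x).
Proof.
move=> Hf t tN; rewrite iterD_scl; first by apply: dM_scl; exact: Hf.
exact: upto_mono (ltnW tN) Hf.
Qed.

Lemma dP_sumE i m (F : 'I_m -> FF) : (forall p, dM (F p)) ->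
  dP i (fun x => \sum_(p < m) F p x) = (fun x => \sum_(p < m) dP i (F p) x).
Proof.
move=> Hf; apply/funext => x; apply/matrixP => a b; rewrite !mxE summxE.
have -> : (fun y => (\sum_(p < m) F p y) a b) = \sum_(p < m) (fun y => F p y a b).
  by apply/funext => y; rewrite summxE fct_sumE.
rewrite derive_sum; last by move=> p; exact: Hf.
by apply: eq_bigr => p _; rewrite mxE.
Qed.

Lemma dM_sum m (F : 'I_m -> FF) : (forall p, dM (F p)) -> dM (fun x => \sum_(p < m) F p x).
Proof.
move=> Hf i x a b.
have -> : (fun y => (\sum_(p < m) F p y) a b) = \sum_(p < m) (fun y => F p y a b).
  by apply/funext => y; rewrite summxE fct_sumE.
by apply: derivable_sum => p; exact: Hf.
Qed.

Lemma iterD_sum t m (F : 'I_m -> FF) : (forall p, upto (size t) (F p)) ->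
  Defs.iterD t (fun x => \sum_(p < m) F p x) = (fun x => \sum_(p < m) Defs.iterD t (F p) x).
Proof.
elim: t => [//|i t IH] /= Hf.
rewrite IH; first by apply: dP_sumE => p; exact: Hf.
by move=> p; exact: upto_mono (Hf p).
Qed.

Lemma upto_sum N m (F : 'I_m -> FF) : (forall p, upto N (F p)) ->
  upto N (fun x => \sum_(p < m) F p x).
Proof.
move=> Hf t tN; rewrite iterD_sum; first by apply: dM_sum => p; exact: Hf.
by move=> p; exact: upto_mono (ltnW tN) (Hf p).
Qed.

Lemma dP_mulE i f g : dM f -> dM g ->
  dP i (fun x => f x *m g x) = (fun x => dP i f x *m g x + f x *m dP i g x).
Proof.
move=> Hf Hg; apply/funext => x; apply/matrixP => a b; rewrite !mxE.
have -> : (fun y => (f y *m g y) a b) =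
     \sum_(k < r) ((fun y => f y a k) * (fun y => g y k b)).
  by apply/funext => y; rewrite mxE fct_sumE.
rewrite derive_sum; last by move=> k; apply: derivableM; [exact: Hf|exact: Hg].
rewrite -big_split /=; apply: eq_bigr => k _.
rewrite deriveM; [|exact: Hf|exact: Hg].
rewrite !mxE /= addrC; congr (_ + _); exact: mulrC.
Qed.

Lemma dM_mul f g : dM f -> dM g -> dM (fun x => f x *m g x).
Proof.
move=> Hf Hg i x a b.
have -> : (fun y => (f y *m g y) a b) =
     \sum_(k < r) ((fun y => f y a k) * (fun y => g y k b)).
  by apply/funext => y; rewrite mxE fct_sumE.
by apply: derivable_sum => k; apply: derivableM; [exact: Hf|exact: Hg].
Qed.

Lemma upto_dP N i f : upto N.+1 f -> upto N (dP i f).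
Proof.
move=> Hf t tN; rewrite -iterD_rcons; apply: Hf.
by rewrite size_rcons ltnS.
Qed.

Lemma upto_mul N f g : upto N f -> upto N g -> upto N (fun x => f x *m g x).
Proof.
elim: N f g => [|N IH] f g Hf Hg t //.
case/lastP: t => [_|t i]; first by apply: dM_mul; [exact: (Hf [::])|exact: (Hg [::])].
rewrite size_rcons ltnS => tN.
rewrite iterD_rcons dP_mulE; [|exact: (Hf [::])|exact: (Hg [::])].
have H1 : upto N (fun x => dP i f x *m g x).
  by apply: IH; [exact: upto_dP|exact: upto_mono Hg].
have H2 : upto N (fun x => f x *m dP i g x).
  by apply: IH; [exact: upto_mono Hf|exact: upto_dP].
rewrite iterD_add; first by apply: dM_add; [exact: H1|exact: H2].
- exact: upto_mono (ltnW tN) H1.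
- exact: upto_mono (ltnW tN) H2.
Qed.

Lemma dP_cst (i : 'I_n) (C : 'M[R]_r) : dP i (fun _ : 'rV[R]_n => C) = (fun _ => 0).
Proof.
apply/funext => x; apply/matrixP => a b; rewrite !mxE.
have -> : (fun _ : 'rV[R]_n => C a b) = cst (C a b) by [].
by rewrite derive_cst.
Qed.

Lemma iterD_cst (s : seq 'I_n) (C : 'M[R]_r) :
  Defs.iterD s (fun _ : 'rV[R]_n => C) = (fun _ => if s is [::] then C else 0).
Proof.
elim: s => [//|i s IH] /=; rewrite IH; exact: dP_cst.
Qed.

Lemma dM_cst (C : 'M[R]_r) : dM (fun _ : 'rV[R]_n => C).
Proof. by move=> i x a b; exact: derivable_cst. Qed.

Lemma sm_cst (C : 'M[R]_r) : smooth_mx (fun _ : 'rV[R]_n => C).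
Proof. by move=> s i x a b; rewrite iterD_cst; exact: derivable_cst. Qed.

Lemma is_derive_coord (x v : 'rV[R]_n) k :
  is_derive x v (fun y : 'rV[R]_n => y ord0 k) (v ord0 k).
Proof.
have Q : \forall h \near (0:R)^',
   h^-1 *: (((fun y : 'rV[R]_n => y ord0 k) \o shift x) (h *: v) - x ord0 k) = v ord0 k.
  near=> h.
  have hn0 : h != 0 by near: h; exact: nbhs_dnbhs_neq.
  by rewrite /= /shift /= !mxE addrK [_ *: _]mulrA mulVf // mul1r.
have C := cvg_near_cst _ Q.
split; first by apply/cvg_ex; exists (v ord0 k); exact: C.
rewrite /derive; apply: cvg_lim; last exact: C; try exact: norm_hausdorff. all: try by [].
Unshelve. all: by end_near.
Qed.

Definition Xc k : FF := fun x => (Defs.coord x k)%:M.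

Lemma Xc_entry k (a b : 'I_r) :
  (fun y => Xc k y a b) = if a == b then (fun y : 'rV[R]_n => y ord0 k) else cst 0.
Proof.
apply/funext => y; rewrite /Xc /Defs.coord !mxE.
by case: (a == b).
Qed.

Lemma dM_Xc k : dM (Xc k).
Proof.
move=> i x a b; rewrite Xc_entry; case: (a == b).
  by case: (is_derive_coord x (eb i) k).
exact: derivable_cst.
Qed.

Lemma dP_Xc i k : dP i (Xc k) = (fun _ => (eb i ord0 k)%:M).
Proof.
apply/funext => x; apply/matrixP => a b; rewrite mxE Xc_entry [RHS]mxE.
case: (a == b); first by case: (is_derive_coord x (eb i) k) => _ ->.
by rewrite derive_cst.
Qed.

Lemma sm_Xc k : smooth_mx (Xc k).
Proof.
move=> s; case/lastP: s => [|s i]; first exact: dM_Xc.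
rewrite iterD_rcons dP_Xc iterD_cst => j x a b; exact: derivable_cst.
Qed.

Lemma dP_coordE i k f : dM f ->
  dP i (fun x => Defs.coord x k *: f x) = (fun x => eb i ord0 k *: f x + Defs.coord x k *: dP i f x).
Proof.
move=> Hf.
have -> : (fun x => Defs.coord x k *: f x) = (fun x => Xc k x *m f x).
  by apply/funext => x; rewrite /Xc mul_scalar_mx.
rewrite dP_mulE //; last exact: dM_Xc.
by apply/funext => x; rewrite dP_Xc /Xc !mul_scalar_mx.
Qed.

Lemma sm_dM f : smooth_mx f -> dM f.
Proof. by move=> H; exact: (H [::]). Qed.

Lemma sm_dP i f : smooth_mx f -> smooth_mx (dP i f).
Proof. by move=> H s; rewrite -iterD_rcons; exact: H. Qed.

Lemma sm_add f g : smooth_mx f -> smooth_mx g -> smooth_mx (fun x => f x + g x).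
Proof. by move=> /smoothE Hf /smoothE Hg; apply/smoothE => N; exact: upto_add. Qed.

Lemma sm_opp f : smooth_mx f -> smooth_mx (fun x => - f x).
Proof. by move=> /smoothE Hf; apply/smoothE => N; exact: upto_opp. Qed.

Lemma sm_sub f g : smooth_mx f -> smooth_mx g -> smooth_mx (fun x => f x - g x).
Proof. by move=> Hf Hg; apply: sm_add => //; exact: sm_opp. Qed.

Lemma sm_scl (c : R) f : smooth_mx f -> smooth_mx (fun x => c *: f x).
Proof. by move=> /smoothE Hf; apply/smoothE => N; exact: upto_scl. Qed.

Lemma sm_sum m (F : 'I_m -> FF) : (forall p, smooth_mx (F p)) ->
  smooth_mx (fun x => \sum_(p < m) F p x).
Proof.
move=> Hf; apply/smoothE => N; apply: upto_sum => p.
by move: (Hf p) => /smoothE.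
Qed.

Lemma sm_mul f g : smooth_mx f -> smooth_mx g -> smooth_mx (fun x => f x *m g x).
Proof. by move=> /smoothE Hf /smoothE Hg; apply/smoothE => N; exact: upto_mul. Qed.

Lemma sm_coord k f : smooth_mx f -> smooth_mx (fun x => Defs.coord x k *: f x).
Proof.
move=> Hf.
have -> : (fun x => Defs.coord x k *: f x) = (fun x => Xc k x *m f x).
  by apply/funext => x; rewrite /Xc mul_scalar_mx.
by apply: sm_mul => //; exact: sm_Xc.
Qed.

Lemma sm_lie f g : smooth_mx f -> smooth_mx g -> smooth_mx (fun x => lie (f x) (g x)).
Proof. by move=> Hf Hg; rewrite /lie; apply: sm_sub; exact: sm_mul. Qed.

Lemma dP_lieE i f g : dM f -> dM g ->
  dP i (fun x => lie (f x) (g x)) =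
  (fun x => lie (dP i f x) (g x) + lie (f x) (dP i g x)).
Proof.
move=> Hf Hg; rewrite /lie.
rewrite (@dP_addE i (fun x => f x *m g x) (fun x => - (g x *m f x))); last by apply: dM_opp; exact: dM_mul.
  rewrite (@dP_oppE i (fun x => g x *m f x)); last exact: dM_mul.
  rewrite !dP_mulE //; apply/funext => x; zmod.
exact: dM_mul.
Qed.

End Smooth.

End PS.

Module PA.
Import PT PZ PL PS.
Set Implicit Arguments. Unset Strict Implicit. Unset Printing Implicit Defensive.
Import GRing.Theory.
Local Open Scope ring_scope.

Section Abs.
Variables (R : realType) (n r : nat).
Local Notation Y := 'rV[R]_n.
Local Notation M := 'M[R]_r.
Variable N : 'I_n -> (Y -> M) -> Y -> M.
Variable F : 'I_n -> 'I_n -> Y -> M.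
Variable S : (Y -> M) -> Prop.
Variable dl : 'I_n -> 'I_n -> R.
Local Notation co y k := (Defs.coord y k).
Hypothesis dl_sum : forall k (G : 'I_n -> M), \sum_p dl k p *: G p = G k.
Hypothesis HSF : forall p j, S (F p j).
Hypothesis HSN : forall p f, S f -> S (N p f).
Hypothesis HSadd : forall f g, S f -> S g -> S (fun y => f y + g y).
Hypothesis HSscl : forall c f, S f -> S (fun y => c *: f y).
Hypothesis HScoord : forall k f, S f -> S (fun y => co y k *: f y).
Hypothesis HSsum : forall G : 'I_n -> Y -> M, (forall p, S (G p)) -> S (fun y => \sum_p G p y).
Hypothesis HNadd : forall k f g, S f -> S g -> N k (fun y => f y + g y) = (fun y => N k f y + N k g y).
Hypothesis HNscl : forall k c f, S f -> N k (fun y => c *: f y) = (fun y => c *: N k f y).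
Hypothesis HNsum : forall k (G : 'I_n -> Y -> M), (forall p, S (G p)) ->
  N k (fun y => \sum_p G p y) = (fun y => \sum_p N k (G p) y).
Hypothesis HNcoord : forall k p f, S f ->
  N k (fun y => co y p *: f y) = (fun y => dl k p *: f y + co y p *: N k f y).
Hypothesis Hcomm : forall k p f, S f -> forall y,
  N k (N p f) y = N p (N k f) y + lie (F k p y) (f y).
Hypothesis Hbian : forall k p j y, N k (F p j) y - N j (F p k) y = N p (F k j) y.
Hypothesis Hanti : forall p j y, F p j y = - F j p y.
Hypothesis Hsol : forall j,
  (fun y => \sum_p N p (F p j) y) = (fun y => 2^-1 *: \sum_q co y q *: F q j y).

Variables (v : Y) (be : R).
Definition Cc p y := co v p + be * co y p.
Definition cform (G : 'I_n -> Y -> M) y :=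
  \sum_p co v p *: G p y + be *: \sum_p co y p *: G p y.

Lemma cformE G y : cform G y = \sum_p Cc p y *: G p y.
Proof.
rewrite /cform scaler_sumr -big_split /=; apply: eq_bigr => p _.
by rewrite /Cc scalerDl scalerA.
Qed.

Lemma S_cform G : (forall p, S (G p)) -> S (cform G).
Proof.
move=> H; rewrite /cform; apply: HSadd.
  by apply: HSsum => p; apply: HSscl.
by apply: HSscl; apply: HSsum => p; apply: HScoord.
Qed.

Lemma N_cform k G : (forall p, S (G p)) ->
  N k (cform G) = (fun y => be *: G k y + \sum_p Cc p y *: N k (G p) y).
Proof.
move=> H; apply/funext => y; rewrite /cform.
rewrite (@HNadd k (fun y => \sum_p co v p *: G p y) (fun y => be *: \sum_p co y p *: G p y)).
- rewrite (@HNsum k (fun p y => co v p *: G p y)); last by move=> p; apply: HSscl.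
  rewrite (@HNscl k be (fun y => \sum_p co y p *: G p y)); last by apply: HSsum => p; apply: HScoord.
  rewrite (@HNsum k (fun p y => co y p *: G p y)); last by move=> p; apply: HScoord.
  under eq_bigr => p _ do rewrite (@HNscl k (co v p) (G p)) //.
  under [X in be *: X]eq_bigr => p _ do rewrite (@HNcoord k p (G p)) //.
  rewrite big_split /= dl_sum.
  rewrite -(cformE (fun p => N k (G p)) y) /cform /=.
  cbv beta; lmod R.
- by apply: HSsum => p; apply: HSscl.
- by apply: HSscl; apply: HSsum => p; apply: HScoord.
Qed.

Definition th j := cform (fun p => F p j).

Lemma S_th j : S (th j).
Proof. by apply: S_cform => p; exact: HSF. Qed.

Lemma Nth k j : N k (th j) = (fun y => be *: F k j y + \sum_p Cc p y *: N k (F p j) y).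
Proof. by rewrite /th N_cform //; move=> p; exact: HSF. Qed.

Definition Dfun k j y := (be + be) *: F k j y + cform (fun p => N p (F k j)) y.

Lemma Dk k j : (fun y => N k (th j) y - N j (th k) y) = Dfun k j.
Proof.
apply/funext => y; rewrite !Nth /Dfun cformE (Hanti j k y).
have E : \sum_p Cc p y *: N k (F p j) y - \sum_p Cc p y *: N j (F p k) y
       = \sum_p Cc p y *: N p (F k j) y.
  by rewrite -sumrB; apply: eq_bigr => p _; rewrite -scalerBr Hbian.
rewrite -E; lmod R.
Qed.

Lemma NDk k j : N k (Dfun k j) =
  (fun y => (be + be) *: N k (F k j) y + (be *: N k (F k j) y
            + \sum_p Cc p y *: N k (N p (F k j)) y)).
Proof.
rewrite /Dfun (@HNadd k (fun y => (be + be) *: F k j y) (cform (fun p => N p (F k j)))).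
- rewrite (@HNscl k (be + be) (F k j)) ?HSF //.
  by rewrite N_cform // => p; apply: HSN; exact: HSF.
- by apply: HSscl; exact: HSF.
- by apply: S_cform => p; apply: HSN; exact: HSF.
Qed.

Lemma N_sol p j : N p (fun y => 2^-1 *: \sum_q co y q *: F q j y) =
  (fun y => 2^-1 *: (F p j y + \sum_q co y q *: N p (F q j) y)).
Proof.
rewrite (@HNscl p 2^-1 (fun y => \sum_q co y q *: F q j y)); last first.
  by apply: HSsum => q; apply: HScoord; exact: HSF.
rewrite (@HNsum p (fun q y => co y q *: F q j y)); last first.
  by move=> q; apply: HScoord; exact: HSF.
apply/funext => y; congr (_ *: _).
under eq_bigr => q _ do rewrite (@HNcoord p q (F q j)) ?HSF //.
by rewrite big_split /= dl_sum.
Qed.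

Lemma lie_sumr (X : M) (c : 'I_n -> R) (Z : 'I_n -> M) :
  lie X (\sum_p c p *: Z p) = \sum_p c p *: lie X (Z p).
Proof.
rewrite /lie mulmx_sumr mulmx_suml -sumrB; apply: eq_bigr => p _.
by rewrite -scalemxAr -scalemxAl scalerBr.
Qed.

Lemma lie_anti (X Z : M) : lie X Z = - lie Z X.
Proof. by rewrite /lie opprB. Qed.

Lemma lieNr (X Z : M) : lie X (- Z) = - lie X Z.
Proof. rewrite /lie mulmxN mulNmx; lmod R. Qed.

Lemma main_abs j x :
  - ( - \sum_k N k (fun y => N k (th j) y - N j (th k) y) x
      + \sum_k lie (F k j x) (th k x)
      + 2^-1 *: \sum_k co x k *: (N k (th j) x - N j (th k) x) )
  = be *: \sum_p N p (F p j) x + 2^-1 *: th j x.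
Proof.
set Jx := \sum_p N p (F p j) x.
set P1 := \sum_p Cc p x *: \sum_q co x q *: N p (F q j) x.
set Q1 := \sum_k \sum_p Cc p x *: lie (F k p x) (F k j x).
have E1 : \sum_k N k (fun y => N k (th j) y - N j (th k) y) x
        = (be + be + be) *: Jx + (2^-1 *: th j x + 2^-1 *: P1) + Q1.
  have S1 : \sum_k N k (fun y => N k (th j) y - N j (th k) y) x
     = (be + be + be) *: Jx + \sum_k \sum_p Cc p x *: N k (N p (F k j)) x.
    have -> : \sum_k N k (fun y => N k (th j) y - N j (th k) y) x
       = \sum_k ((be + be) *: N k (F k j) x + (be *: N k (F k j) x
            + \sum_p Cc p x *: N k (N p (F k j)) x)).
      by apply: eq_bigr => k _; rewrite Dk NDk.
    rewrite big_split /= big_split /= -!scaler_sumr /Jx; lmod R.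
  have S2 : \sum_k \sum_p Cc p x *: N k (N p (F k j)) x
          = \sum_k \sum_p Cc p x *: N p (N k (F k j)) x + Q1.
    rewrite /Q1 -big_split; apply: eq_bigr => k _ /=.
    rewrite -big_split; apply: eq_bigr => p _ /=.
    by rewrite (Hcomm k p (HSF k j)) scalerDr.
  have E : forall p, \sum_k Cc p x *: N p (N k (F k j)) x
                 = Cc p x *: (2^-1 *: (F p j x + \sum_q co x q *: N p (F q j) x)).
    move=> p; rewrite -scaler_sumr; congr (_ *: _).
    have := congr1 (fun f => f x) (@HNsum p (fun k => N k (F k j)) (fun k => HSN k (HSF k j))).
    move=> /= <-.
    by rewrite Hsol N_sol.
  have E' : \sum_p Cc p x *: (2^-1 *: (F p j x + \sum_q co x q *: N p (F q j) x))
          = 2^-1 *: th j x + 2^-1 *: P1.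
    rewrite /th cformE /P1 !scaler_sumr -big_split /=; apply: eq_bigr => p _.
    lmod R.
  rewrite S1 S2 exchange_big /= (eq_bigr _ (fun p _ => E p)) E'.
  lmod R.
have E2 : \sum_k lie (F k j x) (th k x) = Q1.
  rewrite /Q1; apply: eq_bigr => k _.
  rewrite /th cformE lie_sumr; apply: eq_bigr => p _.
  by rewrite (Hanti p k x) lieNr -lie_anti.
have E3 : \sum_k co x k *: (N k (th j) x - N j (th k) x)
        = (be + be) *: (2 *: Jx) + P1.
  have -> : \sum_k co x k *: (N k (th j) x - N j (th k) x)
          = \sum_k co x k *: Dfun k j x.
    by apply: eq_bigr => k _; rewrite -Dk.
  rewrite /Dfun.
  under eq_bigr => k _ do rewrite scalerDr cformE.
  rewrite big_split /=.
  have -> : \sum_k co x k *: ((be + be) *: F k j x) = (be + be) *: (2 *: Jx).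
    have := congr1 (fun f => f x) (Hsol j) => /= HJ.
    rewrite /Jx HJ.
    have -> : \sum_k co x k *: ((be + be) *: F k j x) = (be + be) *: \sum_k co x k *: F k j x.
      by rewrite scaler_sumr; apply: eq_bigr => k _; rewrite !scalerA mulrC.
    by lmod_split R; field.
  congr (_ + _); rewrite /P1.
  under eq_bigr => k _ do rewrite scaler_sumr.
  rewrite exchange_big /=; apply: eq_bigr => p _.
  rewrite scaler_sumr; apply: eq_bigr => q _.
  by rewrite !scalerA mulrC.
rewrite E1 E2 E3.
by lmod_split R; field.
Qed.

End Abs.

End PA.

Module PC.
Import PT PZ PL PS PA.
Set Implicit Arguments. Unset Strict Implicit. Unset Printing Implicit Defensive.
Import Order.TTheory GRing.Theory Num.Theory.
Import numFieldNormedType.Exports.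
Local Open Scope ring_scope.

Lemma dP_comm (R : realType) n r (i j : 'I_n) (f : 'rV[R]_n -> 'M[R]_r) :
  smooth_mx f -> dP i (dP j f) = dP j (dP i f).
Proof.
move=> H; apply/funext => x; apply/matrixP => a b.
apply: (etrans (dP_entry i (dP j f) x a b)).
apply: (etrans _ (esym (dP_entry j (dP i f) x a b))).
rewrite (entry_dP j f a b) (entry_dP i f a b).
have E1 k l y : derivable ('D_(@ebasis R n l) (fun y => f y a b)) y (@ebasis R n k).
  rewrite -(entry_dP l f a b); exact: (H [:: l] k y a b).
have E2 k l m y : derivable ('D_(@ebasis R n l) ('D_(@ebasis R n m) (fun y => f y a b))) y (@ebasis R n k).
  rewrite -(entry_dP m f a b) -(entry_dP l (dP m f) a b); exact: (H [:: l; m] k y a b).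
apply: (@clairaut_vec R _ (fun y => f y a b) (@ebasis R n j) (@ebasis R n i)) => y.
- exact: (H [::]).
- exact: (H [::]).
- exact: E1.
- exact: E1.
- exact: E2.
- exact: E2.
- exact: E2.
Qed.

Ltac mexp := repeat progress rewrite ?mulmxBl ?mulmxBr ?mulmxDl ?mulmxDr ?mulmxA ?mulNmx ?mulmxN.

Section LieAlg.
Variables (R : realType) (r : nat).
Implicit Types (X Y Z : 'M[R]_r).

Lemma lieDr X Y Z : lie X (Y + Z) = lie X Y + lie X Z.
Proof. rewrite /lie mulmxDl mulmxDr; zmod. Qed.

Lemma lieZr (c : R) X Y : lie X (c *: Y) = c *: lie X Y.
Proof. by rewrite /lie -scalemxAl -scalemxAr scalerBr. Qed.

Lemma lie_sum m X (G : 'I_m -> 'M[R]_r) : lie X (\sum_p G p) = \sum_p lie X (G p).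
Proof.
rewrite /lie mulmx_sumr mulmx_suml -sumrB.
by apply: eq_bigr.
Qed.

End LieAlg.

Section Conc.
Variables (R : realType) (n r : nat) (A : gform R n r).
Hypothesis HA : forall i, smooth_mx (A i).
Local Notation S := (@smooth_mx R n r).
Local Notation M := 'M[R]_r.
Local Notation Y := 'rV[R]_n.

Lemma sm_curv p j : S (curv A p j).
Proof.
rewrite /curv; apply: sm_add.
  by apply: sm_sub; apply: sm_dP; exact: HA.
by apply: sm_lie; exact: HA.
Qed.

Lemma sm_nabla p f : S f -> S (nabla A p f).
Proof.
move=> Hf; rewrite /nabla; apply: sm_add; first exact: sm_dP.
by apply: sm_lie => //; exact: HA.
Qed.

Lemma HNadd k (f g : Y -> M) : S f -> S g ->
  nabla A k (fun y => f y + g y) = (fun y => nabla A k f y + nabla A k g y).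
Proof.
move=> Hf Hg; apply/funext => y; rewrite /nabla (dP_addE k (sm_dM Hf) (sm_dM Hg)) /= lieDr.
zmod.
Qed.

Lemma HNscl k (c : R) (f : Y -> M) : S f ->
  nabla A k (fun y => c *: f y) = (fun y => c *: nabla A k f y).
Proof.
move=> Hf; apply/funext => y; rewrite /nabla (dP_sclE k c (sm_dM Hf)) /= lieZr.
lmod R.
Qed.

Lemma HNsum k (G : 'I_n -> Y -> M) : (forall p, S (G p)) ->
  nabla A k (fun y => \sum_p G p y) = (fun y => \sum_p nabla A k (G p) y).
Proof.
move=> Hf; apply/funext => y.
rewrite /nabla (dP_sumE k (fun p => sm_dM (Hf p))) /= lie_sum.
by rewrite -big_split.
Qed.

Lemma HNcoord k p (f : Y -> M) : S f ->
  nabla A k (fun y => Defs.coord y p *: f y) =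
  (fun y => @ebasis R n k ord0 p *: f y + Defs.coord y p *: nabla A k f y).
Proof.
move=> Hf; apply/funext => y; rewrite /nabla (dP_coordE k p (sm_dM Hf)) /= lieZr.
lmod R.
Qed.

Lemma expand_nn k p (f : Y -> M) y : S f ->
  nabla A k (nabla A p f) y = dP k (dP p f) y + (lie (dP k (A p) y) (f y)
     + lie (A p y) (dP k f y)) + lie (A k y) (dP p f y + lie (A p y) (f y)).
Proof.
move=> Hf; rewrite {1}/nabla.
have H1 : dM (dP p f) by apply: sm_dM; exact: sm_dP.
have H2 : dM (fun x => lie (A p x) (f x)) by apply: sm_dM; apply: sm_lie => //; exact: HA.
rewrite (@dP_addE R n r k (dP p f) (fun x => lie (A p x) (f x)) H1 H2).
rewrite /= (dP_lieE k (sm_dM (@HA p)) (sm_dM Hf)) /=.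
done.
Qed.

End Conc.

Lemma comm_abs (R : realType) n r (DDf : 'I_n -> 'I_n -> 'M[R]_r) (Df : 'I_n -> 'M[R]_r)
  (DA : 'I_n -> 'I_n -> 'M[R]_r) (A0 : 'I_n -> 'M[R]_r) (f0 : 'M[R]_r) k p :
  DDf k p = DDf p k ->
  DDf k p + (lie (DA k p) f0 + lie (A0 p) (Df k)) + lie (A0 k) (Df p + lie (A0 p) f0)
  = DDf p k + (lie (DA p k) f0 + lie (A0 k) (Df p)) + lie (A0 p) (Df k + lie (A0 k) f0)
    + lie (DA k p - DA p k + lie (A0 k) (A0 p)) f0.
Proof.
move=> ->; rewrite /lie.
mexp; lmod R.
Qed.

Lemma bian_abs (R : realType) n r (D2 : 'I_n -> 'I_n -> 'I_n -> 'M[R]_r)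
  (D1 : 'I_n -> 'I_n -> 'M[R]_r) (A0 : 'I_n -> 'M[R]_r) k p j :
  (forall a b c, D2 a b c = D2 b a c) ->
  let E a b c := D2 a b c + - D2 a c b + (lie (D1 a b) (A0 c) + lie (A0 b) (D1 a c))
       + lie (A0 a) (D1 b c - D1 c b + lie (A0 b) (A0 c)) in
  E k p j - E j p k = E p k j.
Proof.
move=> HD E; rewrite /E (HD k p j) (HD k j p) (HD j p k) /lie.
mexp; lmod R.
Qed.

Section Conc2.
Variables (R : realType) (n r : nat) (A : gform R n r).
Hypothesis HA : forall i, smooth_mx (A i).
Local Notation S := (@smooth_mx R n r).
Local Notation M := 'M[R]_r.
Local Notation Y := 'rV[R]_n.

Lemma Hcomm k p (f : Y -> M) : S f -> forall y,
  nabla A k (nabla A p f) y = nabla A p (nabla A k f) y + lie (curv A k p y) (f y).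
Proof.
move=> Hf y; rewrite (expand_nn HA k p y Hf) (expand_nn HA p k y Hf).
have HD : dP k (dP p f) y = dP p (dP k f) y by rewrite (dP_comm k p Hf).
exact: (@comm_abs R n r (fun a b => dP a (dP b f) y) (fun a => dP a f y)
   (fun a b => dP a (A b) y) (fun a => A a y) (f y) k p HD).
Qed.

Lemma expand_nF a b c y :
  nabla A a (curv A b c) y = dP a (dP b (A c)) y + - dP a (dP c (A b)) y
    + (lie (dP a (A b) y) (A c y) + lie (A b y) (dP a (A c) y))
    + lie (A a y) (dP b (A c) y - dP c (A b) y + lie (A b y) (A c y)).
Proof.
rewrite {1}/nabla {1}/curv.
have H1 : dM (fun x => dP b (A c) x - dP c (A b) x).
  by apply: sm_dM; apply: sm_sub; apply: sm_dP; exact: HA.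
have H2 : dM (fun x => lie (A b x) (A c x)) by apply: sm_dM; apply: sm_lie; exact: HA.
rewrite (@dP_addE R n r a _ _ H1 H2) /=.
have H3 : dM (dP b (A c)) by apply: sm_dM; apply: sm_dP; exact: HA.
have H4 : dM (fun x => - dP c (A b) x) by apply: sm_dM; apply: sm_opp; apply: sm_dP; exact: HA.
rewrite (@dP_addE R n r a (dP b (A c)) _ H3 H4) /=.
have H5 : dM (dP c (A b)) by apply: sm_dM; apply: sm_dP; exact: HA.
rewrite (@dP_oppE R n r a (dP c (A b)) H5) /=.
rewrite (@dP_lieE R n r a (A b) (A c) (sm_dM (@HA b)) (sm_dM (@HA c))) /=.
done.
Qed.

Lemma Hbian k p j y :
  nabla A k (curv A p j) y - nabla A j (curv A p k) y = nabla A p (curv A k j) y.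
Proof.
rewrite !expand_nF.
have HD : forall a b c, dP a (dP b (A c)) y = dP b (dP a (A c)) y.
  by move=> a b c; rewrite (dP_comm a b (@HA c)).
exact: (@bian_abs R n r (fun a b c => dP a (dP b (A c)) y) (fun a b => dP a (A b) y)
   (fun a => A a y) k p j HD).
Qed.

Lemma Hanti p j y : curv A p j y = - curv A j p y.
Proof. rewrite /curv /lie; lmod R. Qed.

End Conc2.

Lemma dl_sum (R : realType) n r k (G : 'I_n -> 'M[R]_r) :
  \sum_p (@ebasis R n k) ord0 p *: G p = G k.
Proof.
rewrite (bigD1 k) //= big1 ?addr0.
  by rewrite /ebasis mxE !eqxx scale1r.
move=> p pk; rewrite /ebasis mxE eqxx /= (negbTE pk) scale0r //.
Qed.

End PC.

Import PT PZ PL PS PA PC.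

Theorem mainTheorem11 (R : realType) (n r : nat) (g : set 'M[R]_r)
  (A : gform R n r) :
  lie_subalg_so g -> S01 g A ->
  (forall j x, Lop A (Jform A) j x = Jform A j x) /\
  (forall (V : 'rV[R]_n) j x, Lop A (iVF A V) j x = 2^-1 *: iVF A V j x).
Proof.
move=> _ [_ HA Hsol _].
have Hsolf : forall j, (fun y => \sum_p nabla A p (curv A p j) y)
    = (fun y => 2^-1 *: \sum_q Defs.coord y q *: curv A q j y).
  move=> j; apply/funext => y; apply/eqP; rewrite -subr_eq0; apply/eqP; exact: Hsol.
have MA := @main_abs R n r (nabla A) (curv A) (@smooth_mx R n r)
  (fun k p => @ebasis R n k ord0 p) (@dl_sum R n r) (sm_curv HA) (sm_nabla HA)
  (fun f g Hf Hg => sm_add Hf Hg) (fun c f Hf => @sm_scl R n r c f Hf)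
  (fun k f Hf => @sm_coord R n r k f Hf) (fun G HG => sm_sum HG)
  (@HNadd R n r A) (@HNscl R n r A) (@HNsum R n r A) (@HNcoord R n r A) (@Hcomm R n r A HA) (@Hbian R n r A HA) (@Hanti R n r A) Hsolf.
have co0 : forall p, Defs.coord (0 : 'rV[R]_n) p = 0 by move=> p; rewrite /Defs.coord mxE.
split.
  move=> j x.
  have EJ : Jform A = th (curv A) 0 2^-1.
    apply/funext => k; apply/funext => y.
    have := congr1 (fun f => f y) (Hsolf k) => /= HJ.
    rewrite /Jform HJ /th /cform.
    under [X in _ = X + _]eq_bigr => p _ do rewrite co0 scale0r.
    by rewrite big1_eq add0r.
  have EJx : \sum_p nabla A p (curv A p j) x = th (curv A) 0 2^-1 j x.
    exact: (congr1 (fun f => f j x) EJ).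
  rewrite EJ.
  transitivity (2^-1 *: \sum_p nabla A p (curv A p j) x + 2^-1 *: th (curv A) 0 2^-1 j x).
    exact: MA.
  by rewrite EJx; lmod_split R; field.
move=> V j x.
have EV : iVF A V = th (curv A) V 0.
  apply/funext => k; apply/funext => y.
  by rewrite /iVF /th /cform scale0r addr0.
rewrite EV.
transitivity (0 *: \sum_p nabla A p (curv A p j) x + 2^-1 *: th (curv A) V 0 j x).
  exact: MA.
by rewrite scale0r add0r.
Qed.
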